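(* For all integers $n_1,n_2\ge1$ there are polynomials $q_{n_1,n_2}$ (in three variables) and $r_{n_1,n_2}$ (in four variables), all of whose terms have degree exactly $n_1+n_2-2$, such that for all real $a,b,c,d$, $$a^{n_1}c^{n_2}+b^{n_1}d^{n_2}-2\left(\frac{a+b}{2}\right)^{n_1}\left(\frac{c+d}{2}\right)^{n_2}=(a-b)^2q_{n_1,n_2}(a,b,d)+(c-d)^2q_{n_2,n_1}(c,d,b)+(a-b)(c-d)\,r_{n_1,n_2}(a,b,c,d).$$ Moreover, for $n_1=n_2=1$, $q_{1,1}(a,b,d)=0$ and $r_{1,1}(a,b,c,d)=\tfrac12$. *)

(* Defs.v *)
From mathcomp Require Import all_boot all_order all_algebra.
From mathcomp Require Export mpoly.
Set Implicit Arguments. Unset Strict Implicit. Unset Printing Implicit Defensive.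

(* Main.v *)
Require Import Defs.
From mathcomp Require Import all_boot all_order all_algebra.
From mathcomp Require Import mpoly.
From mathcomp Require Import ring lra zify.
Import Order.TTheory GRing.Theory Num.Theory.
Local Open Scope ring_scope.

Definition PP {T : pzRingType} (n : nat) (x y : T) : T :=
  \sum_(i < n) x ^+ (n.-1 - i) * y ^+ i.

Section Homog.
Variables (k : nat) (R : realFieldType).

Lemma homX (i : 'I_k) : ('X_i : {mpoly R[k]}) \is 1%N.-homog.
Proof. by rewrite dhomogX; apply/eqP; exact: mdeg1. Qed.

Lemma homC (c : R) : (c%:MP : {mpoly R[k]}) \is 0%N.-homog.
Proof. have -> : c%:MP = c *: (1 : {mpoly R[k]}) by rewrite -mul_mpolyC mulr1.
by rewrite dhomogZ // dhomog1. Qed.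

Lemma homPP n (x y : {mpoly R[k]}) : x \is 1%N.-homog -> y \is 1%N.-homog ->
  PP n x y \is (n.-1).-homog.
Proof.
move=> hx hy; rewrite /PP; apply: rpred_sum => i _.
have hi : (n.-1 - i + i = n.-1)%N by have := ltn_ord i; lia.
have := dhomogM (dhomogMn (n.-1 - i) hx) (dhomogMn i hy).
by rewrite !mul1n hi.
Qed.

End Homog.
Arguments homX {k R}.
Arguments homC {k R}.
Arguments homPP {k R} n {x y}.

Section Real.
Variable R : realFieldType.

Definition GG (n : nat) (a b : R) : R :=
  2^-1 * \sum_(i < n) ((a + b) / 2) ^+ (n.-1 - i) * PP i a b.

Lemma PPE n (x y : R) : (x - y) * PP n x y = x ^+ n - y ^+ n.
Proof. by rewrite (subrXX_comm n (mulrC x y)). Qed.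

Lemma GGE n (a b : R) :
  (a - b) ^+ 2 * GG n a b = a ^+ n + b ^+ n - 2 * ((a + b) / 2) ^+ n.
Proof.
set s := (a + b) / 2.
have e : (a - b) ^+ 2 * GG n a b =
   ((a - b) / 2) * \sum_(i < n) s ^+ (n.-1 - i) * ((a - b) * PP i a b).
  rewrite /GG mulr_sumr mulr_sumr mulr_sumr; apply: eq_bigr => i _.
  by rewrite /s; field.
rewrite e; under eq_bigr => i _ do rewrite PPE mulrBr.
rewrite sumrB -/(PP n s a) -/(PP n s b).
have e1 : (a - b) / 2 = - (s - a) by rewrite /s; field.
have e2 : (a - b) / 2 = s - b by rewrite /s; field.
rewrite mulrBr {1}e1 e2 mulNr !PPE; ring.
Qed.

End Real.

Section MP.
Variable R : realFieldType.

Definition sM {k} (x y : {mpoly R[k]}) := (x + y) * (2^-1 : R)%:MP.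
Definition GM {k} n (x y : {mpoly R[k]}) :=
  (2^-1 : R)%:MP * \sum_(i < n) (sM x y) ^+ (n.-1 - i) * PP i x y.

Lemma mevalPP k v n (x y : {mpoly R[k]}) :
  (PP n x y).@[v] = PP n x.@[v] y.@[v].
Proof.
rewrite /PP rmorph_sum; apply: eq_bigr => i _.
by rewrite rmorphM !rmorphXn.
Qed.

Lemma mevalsM k v (x y : {mpoly R[k]}) : (sM x y).@[v] = (x.@[v] + y.@[v]) / 2.
Proof. by rewrite /sM mevalM mevalD mevalC. Qed.

Lemma mevalGM k v n (x y : {mpoly R[k]}) : (GM n x y).@[v] = @GG R n x.@[v] y.@[v].
Proof.
rewrite /GM /GG mevalM mevalC rmorph_sum; congr (_ * _); apply: eq_bigr => i _.
by rewrite rmorphM rmorphXn -mevalsM -mevalPP.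
Qed.

Lemma homsM {k} {x y : {mpoly R[k]}} : x \is 1%N.-homog -> y \is 1%N.-homog ->
  sM x y \is 1%N.-homog.
Proof. by move=> hx hy; have := dhomogM (rpredD hx hy) (homC (2^-1 : R)); rewrite addn0. Qed.

Lemma GM1 k (x y : {mpoly R[k]}) : GM 1 x y = 0.
Proof. by rewrite /GM big_ord1 /PP big_ord0 !mulr0. Qed.

Lemma homGM k n (x y : {mpoly R[k]}) : (2 <= n)%N -> x \is 1%N.-homog -> y \is 1%N.-homog ->
  GM n x y \is (n - 2).-homog.
Proof.
move=> hn hx hy; rewrite /GM.
have := dhomogM (homC (2^-1 : R)) (_ : \sum_(i < n) (sM x y) ^+ (n.-1 - i) * PP i x y \is (n - 2).-homog).
rewrite add0n; apply.
apply: rpred_sum => -[[|i] hi] _ /=.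
  by rewrite /PP big_ord0 mulr0 rpred0.
have := dhomogM (dhomogMn (n.-1 - i.+1) (homsM hx hy)) (homPP i.+1 hx hy).
by rewrite mul1n; have -> : (n.-1 - i.+1 + i.+1.-1 = n - 2)%N by lia.
Qed.

End MP.
Arguments sM {R k}.
Arguments GM {R k}.
Arguments homGM {R k n x y}.
Arguments GM1 {R k}.
Arguments homsM {R k x y}.

Lemma mevalXn (R : realFieldType) k v (p : {mpoly R[k]}) n : (p ^+ n).@[v] = p.@[v] ^+ n.
Proof. exact: rmorphXn. Qed.

Lemma key (R : realFieldType) n1 n2 (a b c d : R) :
  a ^+ n1 * c ^+ n2 + b ^+ n1 * d ^+ n2
    - 2 * ((a + b) / 2) ^+ n1 * ((c + d) / 2) ^+ n2
  = (a - b) ^+ 2 * (d ^+ n2 * @GG R n1 a b) + (c - d) ^+ 2 * (b ^+ n1 * @GG R n2 c d)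
    + (a - b) * (c - d) * (PP n1 a b * PP n2 c d
         - 2^-1 * PP n1 ((a + b) / 2) b * PP n2 ((c + d) / 2) d).
Proof.
rewrite mulrCA GGE [(c - d) ^+ 2 * _]mulrCA GGE.
have -> : (a - b) * (c - d) * (PP n1 a b * PP n2 c d
         - 2^-1 * PP n1 ((a + b) / 2) b * PP n2 ((c + d) / 2) d) =
  ((a - b) * PP n1 a b) * ((c - d) * PP n2 c d)
  - 2 * (((a + b) / 2 - b) * PP n1 ((a + b) / 2) b) * (((c + d) / 2 - d) * PP n2 ((c + d) / 2) d).
  by field.
rewrite !PPE.
move: (a ^+ n1) (b ^+ n1) (c ^+ n2) (d ^+ n2) (((a + b) / 2) ^+ n1) (((c + d) / 2) ^+ n2).
move=> A B C D S T; ring.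
Qed.

Theorem lemmaA5 (R : realFieldType) :
  exists (q : nat -> nat -> {mpoly R[3]}) (r : nat -> nat -> {mpoly R[4]}),
    (forall n1 n2 : nat, (1 <= n1)%N -> (1 <= n2)%N ->
       [/\ q n1 n2 \is (n1 + n2 - 2)%N.-homog,
           r n1 n2 \is (n1 + n2 - 2)%N.-homog &
           forall a b c d : R,
             a ^+ n1 * c ^+ n2 + b ^+ n1 * d ^+ n2
               - 2 * ((a + b) / 2) ^+ n1 * ((c + d) / 2) ^+ n2
             = (a - b) ^+ 2 * (q n1 n2).@[fun i : 'I_3 => [:: a; b; d]`_i]
               + (c - d) ^+ 2 * (q n2 n1).@[fun i : 'I_3 => [:: c; d; b]`_i]
               + (a - b) * (c - d)
                   * (r n1 n2).@[fun i : 'I_4 => [:: a; b; c; d]`_i]])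
    /\ q 1%N 1%N = 0
    /\ r 1%N 1%N = (2^-1 : R)%:MP.
Proof.
pose X0 : {mpoly R[3]} := 'X_(@Ordinal 3 0 isT).
pose X1 : {mpoly R[3]} := 'X_(@Ordinal 3 1 isT).
pose X2 : {mpoly R[3]} := 'X_(@Ordinal 3 2 isT).
pose Y0 : {mpoly R[4]} := 'X_(@Ordinal 4 0 isT).
pose Y1 : {mpoly R[4]} := 'X_(@Ordinal 4 1 isT).
pose Y2 : {mpoly R[4]} := 'X_(@Ordinal 4 2 isT).
pose Y3 : {mpoly R[4]} := 'X_(@Ordinal 4 3 isT).
exists (fun n1 n2 => X2 ^+ n2 * GM n1 X0 X1).
exists (fun n1 n2 => PP n1 Y0 Y1 * PP n2 Y2 Y3
          - (2^-1 : R)%:MP * PP n1 (sM Y0 Y1) Y1 * PP n2 (sM Y2 Y3) Y3).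
split; last split.
- move=> n1 n2 h1 h2; split.
  + case: (ltngtP n1 1) => [|hn|e]; first by lia.
    * have := dhomogM (dhomogMn n2 (homX (R:=R) (@Ordinal 3 2 isT) : X2 \is _))
        (homGM hn (homX (R:=R) (@Ordinal 3 0 isT)) (homX (R:=R) (@Ordinal 3 1 isT))).
      by rewrite mul1n; have -> : (n2 + (n1 - 2) = n1 + n2 - 2)%N by lia.
    * by rewrite e GM1 mulr0 rpred0.
  + apply: rpredB.
      have := dhomogM (homPP n1 (homX (R:=R) (@Ordinal 4 0 isT)) (homX (R:=R) (@Ordinal 4 1 isT)))
        (homPP n2 (homX (R:=R) (@Ordinal 4 2 isT)) (homX (R:=R) (@Ordinal 4 3 isT))).
      by have -> : (n1.-1 + n2.-1 = n1 + n2 - 2)%N by lia.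
    have := dhomogM (dhomogM (homC (2^-1 : R)) (homPP n1 (homsM (homX (R:=R) (@Ordinal 4 0 isT)) (homX (R:=R) (@Ordinal 4 1 isT))) (homX (R:=R) (@Ordinal 4 1 isT))))
                    (homPP n2 (homsM (homX (R:=R) (@Ordinal 4 2 isT)) (homX (R:=R) (@Ordinal 4 3 isT))) (homX (R:=R) (@Ordinal 4 3 isT))).
    by have -> : (0 + n1.-1 + n2.-1 = n1 + n2 - 2)%N by lia.
  + move=> a b c d.
    rewrite !mevalB !(mevalM _ (_ ^+ _) (GM _ _ _)) !mevalGM !mevalXn.
    rewrite !mevalM !mevalC !mevalPP !mevalsM !mevalXU /=.
    exact: key.
- by rewrite /= GM1 mulr0.
- rewrite /= /PP !big_ord1 /= !expr0 !mulr1 -mpolyCB; congr (_%:MP).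
  by field.
Qed.
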